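(* Let $k$ be a commutative ring, $A$ a commutative $k$-algebra, $m\ge1$ an integer or $m=\infty$, and $D\in\operatorname{HS}_k(A;m)$. Then $\binom{r+s}{r}D_{r+s}-D_r\circ D_s\in\operatorname{Diff}^{(r+s-1)}_{A/k}$ whenever $r+s\le m$; consequently the total symbol $\Sigma_m(D)$ is of exponential type in $(\operatorname{gr}\operatorname{Diff}_{A/k})[[t]]/(t^{m+1})$. Moreover $\Sigma_m(a\bullet D)=a\Sigma_m(D)$ for every $a\in A$.
   Context: $\operatorname{HS}_k(A;m)$: sequences $D=(D_0,\dots,D_m)$ of $k$-linear maps $A\to A$ with $D_0=\mathrm{Id}$, $D_i(xy)=\sum_{r+s=i}D_r(x)D_s(y)$. Each $D_i$ is a $k$-linear differential operator of order $\le i$. $\operatorname{Diff}^{(i)}_{A/k}$ denotes $k$-linear differential operators of order $\le i$ (defined inductively: order $0$ = multiplications by elements of $A$; $\varphi$ has order $\le i+1$ iff $[\varphi,a]=\varphi\circ a-a\circ\varphi$ has order $\le i$ for all $a$), $\operatorname{Diff}^{(-1)}=0$, $\sigma_i$ the symbol map to $\operatorname{gr}^i\operatorname{Diff}_{A/k}$. Total symbol: $\Sigma_m(D)=\sum_{i=0}^m\sigma_i(D_i)t^i\in(\operatorname{gr}\operatorname{Diff}_{A/k})[[t]]/(t^{m+1})$. An element $\sum_{i=0}^mR_it^i$ of $B[[t]]/(t^{m+1})$ is of exponential type if $R_0=1$ and $\binom{i+j}{i}R_{i+j}=R_iR_j$ whenever $i+j\le m$. For $a\in A$, $a\bullet D$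 is the Hasse–Schmidt derivation with $(a\bullet D)_0=\mathrm{Id}$ and $(a\bullet D)_r=a^rD_r$; for an exponential type element, $a\cdot\sum R_it^i=\sum a^iR_it^i$. *)

(* Defs.v *)
From HB Require Import structures.
From mathcomp Require Import all_boot all_order all_algebra.
Set Implicit Arguments. Unset Strict Implicit. Unset Printing Implicit Defensive.
Import GRing.Theory.
Local Open Scope ring_scope.

(* m : option nat, with None standing for m = infinity. *)
Definition le_m (m : option nat) (i : nat) : bool :=
  if m is Some n then (i <= n)%N else true.

Section Diff.
Variables (k : comPzRingType) (A : comAlgType k).

Definition klinear (phi : A -> A) : Prop :=
  forall (c : k) (x y : A), phi (c *: x + y) = c *: phi x + phi y.

Fixpoint diffop (i : nat) (phi : A -> A) : Prop :=
  match i with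
  | 0 => klinear phi /\ exists b : A, forall x, phi x = b * x
  | i'.+1 => klinear phi /\
             forall a : A, diffop i' (fun x => phi (a * x) - a * phi x)
  end.

(* Diff^{(j-1)}_{A/k}, with Diff^{(-1)} = 0 *)
Definition diffop_pred (j : nat) (phi : A -> A) : Prop :=
  if j is j'.+1 then diffop j' phi else forall x, phi x = 0.

Definition is_HS (m : option nat) (D : nat -> A -> A) : Prop :=
  (forall x, D 0%N x = x) /\
  (forall i, le_m m i -> klinear (D i)) /\
  (forall i, le_m m i -> forall x y : A,
      D i (x * y) = \sum_(r < i.+1) D r x * D (i - r)%N y).

(* Elements of gr^i Diff_{A/k} are represented by operators P in Diff^{(i)};
   sigma_i(P) = sigma_i(Q) in gr^i iff P - Q lies in Diff^{(i-1)}. *)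
Definition gr_eq (i : nat) (P Q : A -> A) : Prop :=
  diffop i P /\ diffop i Q /\ diffop_pred i (fun x => P x - Q x).

(* An element sum_{i<=m} R_i t^i of (gr Diff)[[t]]/(t^{m+1}) is given by a
   family of representatives R i in Diff^{(i)} (so its i-th coefficient is
   sigma_i(R i)).  The product sigma_i(P) sigma_j(Q) in gr is sigma_{i+j}(P o Q);
   the unit is sigma_0(Id). *)
Definition exp_type (m : option nat) (R : nat -> A -> A) : Prop :=
  (forall i, le_m m i -> diffop i (R i)) /\
  gr_eq 0 (R 0%N) id /\
  (forall i j, le_m m (i + j) ->
     gr_eq (i + j) (fun x => R (i + j)%N x *+ 'C(i + j, i)) (fun x => R i (R j x))).

Definition total_symbol (D : nat -> A -> A) : nat -> A -> A := D.

Definition hs_act (a : A) (D : nat -> A -> A) : nat -> A -> A :=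
  fun r => if r is 0%N then id else fun x => a ^+ r * D r x.

(* a . sum R_i t^i = sum a^i R_i t^i, where a^i acts on gr^i by left
   multiplication (the A-module structure sigma_0(a^i) sigma_i(P)). *)
Definition sym_act (a : A) (R : nat -> A -> A) : nat -> A -> A :=
  fun i x => a ^+ i * R i x.

End Diff.

(* Main.v *)
Require Import Defs.
From HB Require Import structures.
From mathcomp Require Import all_boot all_order all_algebra.
Import GRing.Theory.
Local Open Scope ring_scope.

Set Implicit Arguments. Unset Strict Implicit.
Section Gen.
Variables (k : comPzRingType) (A : comAlgType k).
Implicit Types f g h : A -> A.

Definition comm f (a : A) := fun x => f (a * x) - a * f x.

Lemma kl_add0 f x y : klinear f -> f (x + y) = f x + f y.
Proof. by move=> Hf; have := Hf 1 x y; rewrite !scale1r. Qed.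

Lemma kl0 f : klinear f -> f 0 = 0.
Proof.
move=> Hf; apply: (addrI (f 0)); by rewrite addr0 -kl_add0 // addr0.
Qed.

Lemma klN f x : klinear f -> f (- x) = - f x.
Proof. by move=> Hf; have := Hf (-1) x 0; rewrite !scaleN1r addr0 kl0 // addr0. Qed.

Lemma klB f x y : klinear f -> f (x - y) = f x - f y.
Proof. by move=> Hf; rewrite kl_add0 // klN. Qed.

Lemma kl_ext f g : (forall x, f x = g x) -> klinear f -> klinear g.
Proof. by move=> E Hf c x y; rewrite -!E Hf. Qed.

Lemma kl_add f g : klinear f -> klinear g -> klinear (fun x => f x + g x).
Proof. by move=> Hf Hg c x y; rewrite Hf Hg scalerDr addrACA. Qed.

Lemma kl_opp f : klinear f -> klinear (fun x => - f x).
Proof. by move=> Hf c x y; rewrite Hf opprD scalerN. Qed.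

Lemma kl_sub f g : klinear f -> klinear g -> klinear (fun x => f x - g x).
Proof. by move=> Hf Hg; apply: kl_add => //; apply: kl_opp. Qed.

Lemma kl_zero : klinear (fun _ : A => 0).
Proof. by move=> c x y; rewrite scaler0 addr0. Qed.

Lemma kl_id : klinear (fun x : A => x).
Proof. by []. Qed.

Lemma kl_lmul b f : klinear f -> klinear (fun x => b * f x).
Proof. by move=> Hf c x y; rewrite Hf mulrDr scalerAr. Qed.

Lemma kl_rmul b f : klinear f -> klinear (fun x => f (b * x)).
Proof. by move=> Hf c x y; rewrite mulrDr -scalerAr Hf. Qed.

Lemma kl_comp f g : klinear f -> klinear g -> klinear (fun x => f (g x)).
Proof. by move=> Hf Hg c x y; rewrite Hg Hf. Qed.

Lemma kl_natmul f n : klinear f -> klinear (fun x => f x *+ n).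
Proof. by move=> Hf c x y; rewrite Hf mulrnDl scalerMnr. Qed.

Lemma kl_comm f a : klinear f -> klinear (comm f a).
Proof. by move=> Hf; apply: kl_sub; [apply: kl_rmul|apply: kl_lmul]. Qed.

Lemma kl_sum (F : nat -> A -> A) n :
  (forall j, (j < n)%N -> klinear (F j)) ->
  klinear (fun x => \sum_(j < n) F j x).
Proof.
elim: n => [|n IH] HF.
  by apply: (kl_ext _ kl_zero) => x; rewrite big_ord0.
apply: (kl_ext (f := fun x => \sum_(j < n) F j x + F n x)).
  by move=> x; rewrite big_ord_recr.
apply: kl_add; first by apply: IH => j Hj; apply: HF; apply: ltnW.
exact: HF.
Qed.

Lemma diffop_kl i f : diffop i f -> klinear f.
Proof. by case: i => [[]|i []]. Qed.

Lemma diffop_ext i f g : (forall x, f x = g x) -> diffop i f -> diffop i g.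
Proof.
elim: i f g => [|i IH] f g E [Hf H].
  split; first exact: kl_ext Hf.
  by case: H => b Hb; exists b => x; rewrite -E.
split; first exact: kl_ext Hf.
move=> a; apply: (IH _ _ _ (H a)) => x; by rewrite !E.
Qed.

Lemma diffop_zero i : diffop i (fun _ : A => 0 : A).
Proof.
elim: i => [|i IH]; first by split; [exact: kl_zero | exists 0 => x; rewrite mul0r].
split; first exact: kl_zero.
by move=> a; apply: (diffop_ext _ IH) => x; rewrite mulr0 subrr.
Qed.

Lemma diffop_add i f g : diffop i f -> diffop i g -> diffop i (fun x => f x + g x).
Proof.
elim: i f g => [|i IH] f g [Hf H1] [Hg H2].
  split; first exact: kl_add.
  by case: H1 => b1 E1; case: H2 => b2 E2; exists (b1 + b2) => x; rewrite E1 E2 mulrDl.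
split; first exact: kl_add.
move=> a; apply: (diffop_ext _ (IH _ _ (H1 a) (H2 a))) => x.
by rewrite mulrDr opprD addrACA.
Qed.

Lemma diffop_opp i f : diffop i f -> diffop i (fun x => - f x).
Proof.
elim: i f => [|i IH] f [Hf H1].
  split; first exact: kl_opp.
  by case: H1 => b1 E1; exists (- b1) => x; rewrite E1 mulNr.
split; first exact: kl_opp.
move=> a; apply: (diffop_ext _ (IH _ (H1 a))) => x.
by rewrite mulrN opprB opprK addrC.
Qed.

Lemma diffop_sub i f g : diffop i f -> diffop i g -> diffop i (fun x => f x - g x).
Proof. by move=> Hf Hg; apply: diffop_add => //; apply: diffop_opp. Qed.

Lemma diffop_natmul i f n : diffop i f -> diffop i (fun x => f x *+ n).
Proof.
move=> Hf; elim: n => [|n IH]; first by apply: (diffop_ext _ (diffop_zero i)).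
by apply: (diffop_ext _ (diffop_add Hf IH)) => x; rewrite mulrS.
Qed.

Lemma diffop_sum i (F : nat -> A -> A) n :
  (forall j, (j < n)%N -> diffop i (F j)) ->
  diffop i (fun x => \sum_(j < n) F j x).
Proof.
elim: n => [|n IH] HF.
  by apply: (diffop_ext _ (diffop_zero i)) => x; rewrite big_ord0.
apply: (diffop_ext (f := fun x => \sum_(j < n) F j x + F n x)).
  by move=> x; rewrite big_ord_recr.
apply: diffop_add; first by apply: IH => j Hj; apply: HF; apply: ltnW.
exact: HF.
Qed.

Lemma diffop_lmul i b f : diffop i f -> diffop i (fun x => b * f x).
Proof.
elim: i f => [|i IH] f [Hf H1].
  split; first exact: kl_lmul.
  by case: H1 => b1 E1; exists (b * b1) => x; rewrite E1 mulrA.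
split; first exact: kl_lmul.
move=> a; apply: (diffop_ext _ (IH _ (H1 a))) => x.
by rewrite mulrBr mulrCA.
Qed.

Lemma diffop_rmul i b f : diffop i f -> diffop i (fun x => f (b * x)).
Proof.
elim: i f => [|i IH] f [Hf H1].
  split; first exact: kl_rmul.
  by case: H1 => b1 E1; exists (b1 * b) => x; rewrite E1 mulrA.
split; first exact: kl_rmul.
move=> a; apply: (diffop_ext _ (IH _ (H1 a))) => x.
by rewrite mulrCA.
Qed.

Lemma diffop_mono i f : diffop i f -> diffop i.+1 f.
Proof.
elim: i f => [|i IH] f [Hf H1].
  split=> // a; case: H1 => b E.
  by apply: (diffop_ext _ (diffop_zero 0)) => x; rewrite !E mulrCA subrr.
by split=> // a; apply: IH; apply: H1.
Qed.

Lemma diffop_le i j f : (i <= j)%N -> diffop i f -> diffop j f.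
Proof.
elim: j => [|j IH]; first by rewrite leqn0 => /eqP ->.
rewrite leq_eqVlt => /orP [/eqP -> //|]; rewrite ltnS => H Hf.
exact/diffop_mono/IH.
Qed.

Lemma diffop_comp n i j f g : (i + j)%N = n -> diffop i f -> diffop j g ->
  diffop n (fun x => f (g x)).
Proof.
elim: n i j f g => [|n IH] i j f g.
  move/eqP; rewrite addn_eq0 => /andP [/eqP -> /eqP ->] [Hf [b1 E1]] [Hg [b2 E2]].
  split; first exact: kl_comp.
  by exists (b1 * b2) => x; rewrite E1 E2 mulrA.
case: i => [|i].
  rewrite add0n => -> [Hf [b1 E1]] Hg.
  by apply: (diffop_ext _ (diffop_lmul b1 Hg)) => x; rewrite E1.
case: j => [|j].
  rewrite addn0 => -> Hf [Hg [b2 E2]].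
  by apply: (diffop_ext _ (diffop_rmul b2 Hf)) => x; rewrite E2.
move=> Hij Hf Hg; split; first exact: kl_comp (diffop_kl Hf) (diffop_kl Hg).
move=> a.
have H1 : diffop n (fun x => f (comm g a x)).
  apply: (IH i.+1 j); [by move: Hij; rewrite addnS => -[]| exact: Hf| by case: Hg => _; apply].
have H2 : diffop n (fun x => comm f a (g x)).
  apply: (IH i j.+1); [by move: Hij; rewrite addSn => -[]| by case: Hf => _; apply | exact: Hg].
apply: (diffop_ext _ (diffop_add H1 H2)) => x.
by rewrite /comm (klB _ _ (diffop_kl Hf)) addrA subrK.
Qed.

Lemma dp_zero j f : (forall x, f x = 0) -> diffop_pred j f.
Proof. by case: j => [//|j] E; apply: (diffop_ext _ (diffop_zero j)). Qed.

Lemma dp_ext j f g : (forall x, f x = g x) -> diffop_pred j f -> diffop_pred j g.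
Proof. case: j => [|j] E /=; [by move=> H x; rewrite -E | exact: diffop_ext]. Qed.

Lemma dp_add j f g : diffop_pred j f -> diffop_pred j g -> diffop_pred j (fun x => f x + g x).
Proof. case: j => [|j] /=; [by move=> H1 H2 x; rewrite H1 H2 addr0 | exact: diffop_add]. Qed.

Lemma dp_opp j f : diffop_pred j f -> diffop_pred j (fun x => - f x).
Proof. case: j => [|j] /=; [by move=> H1 x; rewrite H1 oppr0 | exact: diffop_opp]. Qed.

Lemma dp_sub j f g : diffop_pred j f -> diffop_pred j g -> diffop_pred j (fun x => f x - g x).
Proof. by move=> H1 H2; apply: dp_add => //; apply: dp_opp. Qed.

Lemma dp_lmul j b f : diffop_pred j f -> diffop_pred j (fun x => b * f x).
Proof. case: j => [|j] /=; [by move=> H1 x; rewrite H1 mulr0 | exact: diffop_lmul]. Qed.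

Lemma dp_natmul j f n : diffop_pred j f -> diffop_pred j (fun x => f x *+ n).
Proof. case: j => [|j] /=; [by move=> H1 x; rewrite H1 mul0rn | exact: diffop_natmul]. Qed.

Lemma dp_compl i j h f : diffop i h -> diffop_pred j f -> diffop_pred (i + j) (fun x => h (f x)).
Proof.
case: j => [|j] Hh Hf.
  by apply: dp_zero => x; rewrite Hf (kl0 (diffop_kl Hh)).
by rewrite addnS /=; apply: diffop_comp Hh Hf.
Qed.

Lemma dp_compr i j h f : diffop_pred j f -> diffop i h -> diffop_pred (j + i) (fun x => f (h x)).
Proof.
case: j => [|j] Hf Hh; first by apply: dp_zero => x; rewrite Hf.
by rewrite addSn /=; apply: diffop_comp Hf Hh.
Qed.

Definition eqm j f g := diffop_pred j (fun x => f x - g x).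

Lemma eqm_ext j f f' g g' : (forall x, f x = f' x) -> (forall x, g x = g' x) ->
  eqm j f g -> eqm j f' g'.
Proof. by move=> E1 E2; apply: dp_ext => x; rewrite E1 E2. Qed.

Lemma eqm_refl j f g : (forall x, f x = g x) -> eqm j f g.
Proof. by move=> E; apply: dp_zero => x; rewrite E subrr. Qed.

Lemma eqm_sym j f g : eqm j f g -> eqm j g f.
Proof. by move=> H; apply: (dp_ext _ (dp_opp H)) => x; rewrite opprB. Qed.

Lemma eqm_trans j f g h : eqm j f g -> eqm j g h -> eqm j f h.
Proof. by move=> H1 H2; apply: (dp_ext _ (dp_add H1 H2)) => x; rewrite addrA subrK. Qed.

Lemma eqm_add j f1 f2 g1 g2 : eqm j f1 g1 -> eqm j f2 g2 ->
  eqm j (fun x => f1 x + f2 x) (fun x => g1 x + g2 x).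
Proof. by move=> H1 H2; apply: (dp_ext _ (dp_add H1 H2)) => x; rewrite opprD addrACA. Qed.

Lemma eqm_sub j f1 f2 g1 g2 : eqm j f1 g1 -> eqm j f2 g2 ->
  eqm j (fun x => f1 x - f2 x) (fun x => g1 x - g2 x).
Proof.
move=> H1 H2; have H3 : eqm j (fun x => - f2 x) (fun x => - g2 x).
  by apply: (dp_ext _ (dp_opp H2)) => x; rewrite opprB opprK addrC.
exact: eqm_add H1 H3.
Qed.

Lemma eqm_lmul j b f g : eqm j f g -> eqm j (fun x => b * f x) (fun x => b * g x).
Proof. by move=> H; apply: (dp_ext _ (dp_lmul b H)) => x; rewrite mulrBr. Qed.

Lemma eqm_natmul j n f g : eqm j f g -> eqm j (fun x => f x *+ n) (fun x => g x *+ n).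
Proof. by move=> H; apply: (dp_ext _ (dp_natmul n H)) => x; rewrite mulrnBl. Qed.

End Gen.

Section HS.
Variables (k : comPzRingType) (A : comAlgType k) (m : option nat) (D : nat -> A -> A).
Hypothesis hD : is_HS m D.

Lemma hD0 x : D 0 x = x. Proof. by case: hD. Qed.
Lemma hDl i : le_m m i -> klinear (D i). Proof. by case: hD => _ [H _]; apply: H. Qed.
Lemma hDm i : le_m m i -> forall x y, D i (x * y) = \sum_(r < i.+1) D r x * D (i - r)%N y.
Proof. by case: hD => _ [_ H]; apply: H. Qed.

Lemma le_m_le i j : (i <= j)%N -> le_m m j -> le_m m i.
Proof. by case: m => //= n H1 H2; apply: leq_trans H1 H2. Qed.

Lemma L0 i a x : le_m m i.+1 ->
  comm (D i.+1) a x = \sum_(j < i.+1) D j.+1 a * D (i - j)%N x.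
Proof.
move=> Hi; rewrite /comm hDm // big_ord_recl /= hD0 subn0 addrAC subrr add0r.
by apply: eq_bigr => j _; rewrite /bump /= add1n subSS.
Qed.

Lemma D_order i : le_m m i -> diffop i (D i).
Proof.
elim/ltn_ind: i => -[|i] IH Hi.
  by split; [exact: hDl | exists 1 => x; rewrite hD0 mul1r].
split; first exact: hDl.
move=> a; apply: (@diffop_ext _ _ i (fun x => \sum_(j < i.+1) D j.+1 a * D (i - j)%N x)).
  by move=> x; rewrite -L0.
apply: (@diffop_sum _ _ i (fun j x => D j.+1 a * D (i - j)%N x)) => j Hj; apply: diffop_lmul.
apply: (diffop_le (i := (i - j)%N)); first exact: leq_subr.
apply: IH; first by rewrite ltnS leq_subr.
by apply: le_m_le Hi; rewrite (leq_trans (leq_subr _ _)).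
Qed.

Lemma L1 i a : le_m m i.+1 -> eqm i (comm (D i.+1) a) (fun x => D 1 a * D i x).
Proof.
move=> Hi.
have E : forall x, \sum_(j < i) D j.+2 a * D (i - j.+1)%N x =
   comm (D i.+1) a x - D 1 a * D i x.
  by move=> x; rewrite L0 // big_ord_recl /= subn0 addrAC subrr add0r;
    apply: eq_bigr => j _; rewrite /bump /= add1n.
apply: (dp_ext E); case: i Hi E => [|i] Hi E.
  by move=> x; rewrite big_ord0.
apply: (@diffop_sum _ _ i (fun j x => D j.+2 a * D (i.+1 - j.+1)%N x)) => j Hj; apply: diffop_lmul; rewrite subSS.
apply: (diffop_le (i := (i - j)%N)); first exact: leq_subr.
apply: D_order; apply: le_m_le Hi; apply: leq_trans (leq_subr j i) _.
by apply/leqW/leqnSn.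
Qed.


Lemma alg1 (u1 u2 v1 v2 a : A) c :
  (u1 *+ c - v1) - a * (u2 *+ c - v2) = (u1 - a * u2) *+ c - (v1 - a * v2).
Proof.
rewrite mulrBr mulrnAr mulrnBl opprB opprD !addrA opprK addrAC.
by congr (_ + _); rewrite addrAC.
Qed.

Lemma Part1 r s : le_m m (r + s) ->
  diffop_pred (r + s) (fun x => D (r + s)%N x *+ 'C(r + s, r) - D r (D s x)).
Proof.
suff H : forall n r s, (r + s)%N = n -> le_m m n ->
    diffop_pred n (fun x => D n x *+ 'C(n, r) - D r (D s x)).
  by move=> Hm; apply: H.
clear r s.
elim=> [|n IH] [|r] [|s] Hrs Hm //.
- by move=> x; rewrite !hD0 subrr.
- by apply: dp_zero => x; rewrite bin0 hD0 add0n in Hrs *; rewrite Hrs subrr.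
- by apply: dp_zero => x; rewrite addn0 in Hrs; rewrite -Hrs binn hD0 subrr.
rewrite addSn addnS in Hrs; case: Hrs => Hn; subst n.
set N := (r + s).+1.
have HmN : le_m m N by apply: le_m_le Hm.
have Hmr : le_m m r.+1 by apply: le_m_le Hm; rewrite ltnS -addnS; apply: leq_addr.
have Hms : le_m m s.+1 by apply: le_m_le Hm; rewrite ltnS -addSn; apply: leq_addl.
have Hmr' : le_m m r by apply: le_m_le Hmr.
have Hms' : le_m m s by apply: le_m_le Hms.
split.
  apply: kl_sub; first by apply: kl_natmul; apply: hDl.
  by apply: kl_comp; apply: hDl.
move=> a; change (diffop_pred N (comm (fun x => D N.+1 x *+ 'C(N.+1, r.+1) - D r.+1 (D s.+1 x)) a)).
set b := D 1 a.
have F1 := L1 a Hm.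
have F2 : eqm N (fun x => comm (D r.+1) a (D s.+1 x)) (fun x => b * D r (D s.+1 x)).
  by have := dp_compr (L1 a Hmr) (D_order Hms); rewrite addnS.
have F3 : eqm N (fun x => D r.+1 (comm (D s.+1) a x)) (fun x => D r.+1 (b * D s x)).
  have := dp_compl (D_order Hmr) (L1 a Hms); rewrite addSn; apply: dp_ext => x.
  by rewrite (klB _ _ (hDl Hmr)).
have F4 : eqm N (fun x => D r.+1 (b * D s x)) (fun x => b * D r.+1 (D s x)).
  have : diffop (r + s) (fun x => comm (D r.+1) b (D s x)).
    by apply: diffop_comp (erefl _) _ (D_order Hms'); case: (D_order Hmr) => _; apply.
  by [].
have IH1 := IH r.+1 s (addSn _ _) HmN.
have IH2 := IH r s.+1 (addnS _ _) HmN.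
have S1 := eqm_add (eqm_trans F3 (eqm_trans F4 (eqm_lmul b (eqm_sym IH1))))
                   (eqm_trans F2 (eqm_lmul b (eqm_sym IH2))).
have S3 := eqm_sub (eqm_natmul 'C(N.+1, r.+1) F1) S1.
apply: (dp_ext _ S3) => x.
rewrite /comm alg1 -!mulrnAr -mulrDr -mulrnDr -binS subrr subr0.
congr (_ - _); rewrite (klB _ _ (hDl Hmr)).
by rewrite addrA subrK.
Qed.

End HS.

Lemma hs_actE (k : comPzRingType) (A : comAlgType k) (m : option nat) (D : nat -> A -> A)
  (hD : is_HS m D) a r x : hs_act a D r x = a ^+ r * D r x.
Proof. by case: r => [|r] //=; rewrite expr0 mul1r (hD0 hD). Qed.

Unset Implicit Arguments.

Theorem mainTheorem7 (k : comPzRingType) (A : comAlgType k) (m : option nat)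
    (hm : if m is Some n then (1 <= n)%N else true)
    (D : nat -> A -> A) (hD : is_HS m D) :
  (forall r s : nat, le_m m (r + s) ->
     diffop_pred (r + s) (fun x => D (r + s)%N x *+ 'C(r + s, r) - D r (D s x)))
  /\ exp_type m (total_symbol D)
  /\ (forall a : A, is_HS m (hs_act a D) /\
        forall i, le_m m i ->
          gr_eq i (total_symbol (hs_act a D) i) (sym_act a (total_symbol D) i)).
Proof.
have P1 := Part1 hD.
split=> //.
split.
  rewrite /total_symbol; split; first by move=> i; apply: D_order.
  split.
    split; first by apply: (D_order hD); case: (m).
    split; first by split=> //; exists 1 => x; rewrite mul1r.
    by move=> x /=; rewrite (hD0 hD) subrr.
  move=> i j Hij; split; last split.
  - exact: (diffop_natmul 'C(i + j, i) (D_order hD Hij)).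
  - apply: (@diffop_comp _ _ (i + j) i j (D i) (D j) (erefl _)); apply: (D_order hD); apply: le_m_le Hij.
      exact: leq_addr.
    exact: leq_addl.
  - exact: P1.
move=> a; split.
  split; first by move=> x.
  split.
    move=> [|i] Hi //= c x y; rewrite (hDl hD Hi).
    by rewrite mulrDr scalerAr.
  move=> i Hi x y; rewrite (hs_actE hD) (hDm hD Hi) mulr_sumr.
  apply: eq_bigr => r _; rewrite !(hs_actE hD).
  by rewrite mulrACA -exprD subnKC // -ltnS.
move=> i Hi; rewrite /total_symbol /sym_act.
have Ho : diffop i (fun x => a ^+ i * D i x).
  by apply: diffop_lmul; apply: (D_order hD).
split; last split.
- by apply: (diffop_ext _ Ho) => x; rewrite (hs_actE hD).
- exact: Ho.
- by apply: dp_zero => x; rewrite (hs_actE hD) subrr.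
Qed.
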